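(* For $1\le k\le n-1$, the random variable $U_k-1$ has a hypergeometric distribution with parameters $n-1$ (population size), $k-1$ (number of marked elements) and $n-k-1$ (number of draws), i.e. $\mathbf P(U_k-1=j)=\binom{k-1}{j}\binom{n-k}{n-k-1-j}\big/\binom{n-1}{n-k-1}$.
   Context: Urn process: let $n\ge2$. An urn initially contains $n$ black balls. It is emptied in $n$ steps: in each of the first $n-1$ steps a uniformly random pair of balls is removed from the urn and replaced by one red ball; in step $n$ the last remaining ball is removed. $U_k$ is the number of red balls in the urn after $k$ steps, $0\le k\le n$. *)

(* Defs.v *)
From HB Require Import structures.
From mathcomp Require Import all_boot all_order all_algebra.
Set Implicit Arguments. Unset Strict Implicit. Unset Printing Implicit Defensive.
Import Order.TTheory GRing.Theory Num.Theory.

(* An urn is a sequence of balls: [false] = black, [true] = red.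
   Balls are labelled by their positions, so a uniformly random pair of balls
   is a uniformly random pair of positions (i, j) with i < j. *)

Definition rem2 (i j : nat) (s : seq bool) : seq bool :=
  [seq nth false s t | t <- iota 0 (size s) & (t != i) && (t != j)].

Definition step (i j : nat) (s : seq bool) : seq bool := rcons (rem2 i j s) true.

(* probU k s r = probability that, starting from urn s and performing k steps
   (each removing a uniformly random pair of balls and adding one red ball),
   the urn contains exactly r red balls. *)
Fixpoint probU (k : nat) (s : seq bool) (r : nat) : rat :=
  match k with
  | 0 => (count id s == r)%:R
  | k'.+1 =>
      \sum_(i < size s) \sum_(j < size s | (i < j)%N)
         probU k' (step i j s) r / ('C(size s, 2))%:R
  end%R.

Definition probUk (n k r : nat) : rat := probU k (nseq n false) r.

(* Main.v *)
Require Import Defs.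
From HB Require Import structures.
From mathcomp Require Import all_boot all_order all_algebra.
Import Order.TTheory GRing.Theory Num.Theory.
From Stdlib Require Import Lia ArithRing Arith.
Ltac cv := rewrite -?multE -?plusE -?minusE.
Ltac nr := cv; ring.
Set Implicit Arguments. Unset Strict Implicit.


Local Close Scope ring_scope.
Lemma count_split (T : Type) (p q : pred T) l :
  count p l = count (predI p q) l + count (predI p (predC q)) l.
Proof.
elim: l => [//|x l IH] /=; rewrite IH.
by case: (p x); case: (q x) => /=; rewrite ?add0n ?addnS ?addSn.
Qed.

Lemma count_iota1 (a : pred nat) m i : i < m ->
  count (fun t => a t && (t == i)) (iota 0 m) = a i.
Proof.
move=> him; case ai: (a i).
- rewrite (eq_count (a2 := pred1 i)); first by rewrite count_uniq_mem ?iota_uniq // mem_iota him.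
  by move=> t /=; case: eqP => [->|]; rewrite ?ai ?andbF ?andbT.
- rewrite (eq_count (a2 := pred0)) ?count_pred0 //.
  by move=> t /=; case: eqP => [->|]; rewrite ?ai ?andbF.
Qed.

Lemma count_rem2 (a : pred bool) i j s : i < j -> j < size s ->
  count a (rem2 i j s) + a (nth false s i) + a (nth false s j) = count a s.
Proof.
move=> hij hj; have hi : i < size s by apply: ltn_trans hj.
rewrite /rem2 count_map count_filter.
rewrite -[X in _ = count a X](mkseq_nth false s) /mkseq count_map.
rewrite [RHS](count_split _ (fun t => (t != i) && (t != j))) -addnA; congr (_ + _).
rewrite -(count_iota1 (preim (nth false s) a) hi) -(count_iota1 (preim (nth false s) a) hj).
rewrite -count_predUI.
rewrite (eq_count (a1 := predI _ _) (a2 := pred0)); last first.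
  move=> t /=; case: (t =P i) => [->|]; rewrite ?andbF //= ?(ltn_eqF hij) ?andbF //.
rewrite count_pred0 addn0; apply: eq_count => t /=.
by case: (a (nth false s t)); case: (t == i); case: (t == j).
Qed.

Lemma count_step (a : pred bool) i j s : i < j -> j < size s ->
  count a (step i j s) + a (nth false s i) + a (nth false s j) = count a s + a true.
Proof.
move=> hij hj; rewrite /step -cats1 count_cat /= addn0.
rewrite -(count_rem2 a hij hj) -?plusE; lia.
Qed.

Local Open Scope ring_scope.


Definition T (F : nat -> nat -> rat) (b c : nat) : rat :=
  (('C(b,2))%:R * F (b-2)%N c.+1 + (b*c)%:R * F b.-1 c + ('C(c,2))%:R * F b c.-1)
   / ('C(b+c,2))%:R.

Fixpoint gen (k : nat) (F : nat -> nat -> rat) : nat -> nat -> rat :=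
  match k with 0 => F | k'.+1 => T (gen k' F) end.

Lemma genS k F : gen k.+1 F = gen k (T F).
Proof. elim: k => [//|k IH] /=; by rewrite -IH. Qed.

Lemma gen_loc k F F' b c :
  (forall b' c', (b' + c' + k = b + c)%N -> F b' c' = F' b' c') ->
  gen k F b c = gen k F' b c.
Proof.
elim: k b c => [|k IH] b c H /=; first by apply: H; rewrite addn0.
rewrite /T; congr (_ / _); congr (_ + _ + _).
- case: (ltnP b 2) => hb; first by rewrite bin_small // !mul0r.
  congr (_ * _); apply: IH => b' c' E; apply: H.
  rewrite addnS E; move/ssrnat.leP: hb; rewrite -?plusE -?minusE; lia.
- case: b H => [|b] H; first by rewrite mul0n mul0r mul0r.
  congr (_ * _); apply: IH => b' c' E; apply: H.
  by rewrite addnS E /= addSn.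
- case: c H => [|[|c]] H; try by rewrite bin_small // mul0r mul0r.
  congr (_ * _); apply: IH => b' c' E; apply: H.
  by rewrite addnS E /= !addnS.
Qed.

Lemma lin3 (p q r x A1 A2 A3 B1 B2 B3 D : rat) :
  (p*(x*A1+B1) + q*(x*A2+B2) + r*(x*A3+B3))/D =
  x*((p*A1+q*A2+r*A3)/D) + (p*B1+q*B2+r*B3)/D.
Proof.
rewrite [x * (_ / _)]mulrA -mulrDl; congr (_ / _).
rewrite !mulrDr [p * (x * _)]mulrCA [q * (x * _)]mulrCA [r * (x * _)]mulrCA.
by rewrite (addrACA (x * (p * A1))) (addrACA (_ + _) (_ + _)).
Qed.

Lemma gen_lin k (x : rat) F G b c :
  gen k (fun b c => x * F b c + G b c) b c = x * gen k F b c + gen k G b c.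
Proof.
elim: k b c => [//|k IH] b c /=.
by rewrite /T !IH lin3.
Qed.

Lemma gen_zero k b c : gen k (fun _ _ => 0) b c = 0.
Proof.
elim: k b c => [//|k IH] b c /=.
by rewrite /T !IH !mulr0 !addr0 mul0r.
Qed.

Lemma sum1 (s : seq bool) (K : nat -> rat) (x : nat) :
  \sum_(j < size s) K (x + nth false s j)%N =
  (count id s)%:R * K (x + 1)%N + (count negb s)%:R * K x.
Proof.
elim: s => [|y s IH]; first by rewrite big_ord0 !mul0r addr0.
rewrite /= big_ord_recl /=.
under eq_bigr => j _ do rewrite add0n.
rewrite IH; case: y => /=; rewrite ?add0n !natrD !mulrDl !mul1r ?addn1 ?addn0;
  rewrite ?mul0r ?add0r ?addr0.
- by rewrite addrA.
- by rewrite addrCA.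
Qed.

Lemma L3 (x0 x1 x2 y1 y2 z0 z1 z2 : nat) (K0 K1 K2 : rat) :
  z0 = x0 -> z1 = (x1 + y1)%N -> z2 = (x2 + y2)%N ->
  y2%:R*K2 + y1%:R*K1 + (x0%:R*K0 + x1%:R*K1 + x2%:R*K2) = z0%:R*K0 + z1%:R*K1 + z2%:R*K2.
Proof.
move=> -> -> ->; rewrite !natrD !mulrDl.
rewrite addrC -!addrA; congr (_ + (_ + _)).
by rewrite [y2%:R * K2 + _]addrC addrCA.
Qed.
Lemma L3' (x0 x1 x2 y0 y1 z0 z1 z2 : nat) (K0 K1 K2 : rat) :
  z0 = (x0 + y0)%N -> z1 = (x1 + y1)%N -> z2 = x2 ->
  y1%:R*K1 + y0%:R*K0 + (x0%:R*K0 + x1%:R*K1 + x2%:R*K2) = z0%:R*K0 + z1%:R*K1 + z2%:R*K2.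
Proof.
move=> -> -> ->; rewrite !natrD !mulrDl.
rewrite addrC -!addrA; congr (_ + _).
rewrite [RHS]addrCA; congr (_ + _).
by rewrite addrC [y1%:R*K1 + _]addrC -addrA.
Qed.

Lemma pair_sum (s : seq bool) (K : nat -> rat) :
  \sum_(i < size s) \sum_(j < size s | (i < j)%N) K (nth false s i + nth false s j)%N =
  ('C(count negb s,2))%:R * K 0%N + (count negb s * count id s)%:R * K 1%N
  + ('C(count id s,2))%:R * K 2%N.
Proof.
elim: s => [|y s IH]; first by rewrite big_ord0 !mul0r !addr0.
rewrite /= big_ord_recl.
rewrite big_mkcond big_ord_recl /=.
rewrite add0r.
rewrite [X in _ + X = _](eq_bigr (fun i : 'I_(size s) => \sum_(j < size s | (i < j)%N) K (nth false s i + nth false s j)%N)); last first.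
  move=> i _; rewrite big_mkcond big_ord_recl /= add0r add0n big_mkcond.
  rewrite [RHS]big_mkcond; apply: eq_bigr => j _; rewrite /bump /= !add1n ltnS add0n //.
set Z := (X in _ + X = _).
have -> : Z = ('C(count negb s,2))%:R * K 0%N + (count negb s * count id s)%:R * K 1%N + ('C(count id s,2))%:R * K 2%N by exact: IH.
rewrite sum1.
case: y => /=; rewrite ?add0n.
- apply: L3 => //; first by rewrite add1n mulnSr.
  by rewrite add1n binS bin1.
- apply: L3' => //; first by rewrite add1n binS bin1.
  by rewrite add1n mulSn addnC.
Qed.

Definition ind (r : nat) : nat -> nat -> rat := fun b c => ((c == r)%:R : rat).

Lemma probU_gen k s r : probU k s r = gen k (ind r) (count negb s) (count id s).
Proof.
elim: k s => [//|k IH] s /=.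
set b := count negb s; set c := count id s; set G := gen k (ind r).
set D := ('C(size s, 2))%:R : rat.
pose K (t : nat) := G (if t is 0 then (b-2)%N else if t is 1 then b.-1 else b)
                      (if t is 0 then c.+1 else if t is 1 then c else c.-1) / D.
have hs : size s = (b + c)%N by rewrite addnC -(count_predC id s).
rewrite (eq_bigr (fun i : 'I_(size s) => \sum_(j < size s | (i < j)%N) K (nth false s i + nth false s j)%N)); last first.
  move=> i _; apply: eq_bigr => j hij.
  have hj := ltn_ord j.
  have e1 := count_step negb hij hj.
  have e2 := count_step id hij hj.
  rewrite IH /K; congr (_ / _).
  move: e1 e2; rewrite -/b -/c.
  case: (nth false s i); case: (nth false s j) => /= e1 e2; congr (G _ _);
   move: e1 e2; rewrite -?plusE -?minusE => e1 e2; lia.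
rewrite pair_sum -/b -/c /K /= /T -/G /D hs.
rewrite !mulrA -!mulrDl; congr (_ / _).
Qed.

Local Close Scope ring_scope.
Lemma key (a m u P Q M1 x1 x2 x3 y0 y1 y2 z1 z2 N N' D A G Cm1 : nat) :
  u*x2 = P*x1 -> (u+1)*x3 = Q*x2 -> m*Cm1 = Q*x2 -> (a+2)*z1 = u*z2 ->
  (a+2)*N' = M1*N -> 2*D = m*M1 -> 2*A = P*Q -> 2*G = (u+1)*u ->
  z2 = y0 + 2*y1 + y2 ->
  (A*(y0*x1) + Q*u*(y1*x2) + G*(y2*x3)) * N' = (z1*Cm1) * D * N.
Proof.
cv; move=> R1 R2 R3 R4 R5 R6 R7 R8 Rz.
have h1 : 2*(A*(y0*x1)) = y0*Q*(u*x2).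
  cv; rewrite R1; transitivity ((2*A)*(y0*x1)); [nr | cv; rewrite R7; nr].
move: h1; cv => h1.
have h2 : 2*(G*(y2*x3)) = y2*u*(Q*x2).
  cv; rewrite -R2; transitivity ((2*G)*(y2*x3)); [nr | cv; rewrite R8; nr].
move: h2; cv => h2.
have E1 : 2*(A*(y0*x1) + Q*u*(y1*x2) + G*(y2*x3)) = Q*u*x2*z2.
  transitivity (2*(A*(y0*x1)) + 2*(Q*u*(y1*x2)) + 2*(G*(y2*x3))); [nr | cv; rewrite h1 h2 Rz; nr].
move: E1; cv => E1.
apply (proj1 (Nat.mul_cancel_l _ _ (Nat.mul 2 (Nat.add a 2)) ltac:(lia))).
transitivity ((2*(A*(y0*x1) + Q*u*(y1*x2) + G*(y2*x3)))*((a+2)*N')); first nr.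
cv; rewrite E1 R5.
symmetry.
transitivity (((a+2)*z1)*Cm1*(2*D)*N); first nr.
cv; rewrite R4 R6; transitivity (u*z2*(m*Cm1)*M1*N); first nr.
cv; rewrite R3; nr.
Qed.

Lemma Tind_nat m c u :
 'C(m-c,2) * (c.+1 == u) + (m-c)*c*(c==u) + 'C(c,2)*(c.-1 == u) =
 (if u is u'.+1 then 'C(m-u',2) else 0) * (c == u.-1) + (m-u)*u*(c==u) + 'C(u.+1,2)*(c==u.+1).
Proof.
case: u => [|u] /=.
- case: c => [|c] /=; rewrite ?muln0 ?muln1 ?mul0n ?addn0 ?add0n //.
  by case: c => [|c] /=; rewrite ?muln0 ?muln1 ?mul0n ?addn0 ?add0n.
- do 5?[case: eqP => ?]; subst; rewrite ?muln0 ?muln1 ?mul0n ?addn0 ?add0n //; try (cv; lia).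
Qed.

Local Open Scope ring_scope.

Definition al (m u : nat) : rat := ((if u is u'.+1 then 'C(m-u',2) else 0)%N)%:R / ('C(m,2))%:R.
Definition be (m u : nat) : rat := ((m-u)*u)%N%:R / ('C(m,2))%:R.
Definition ga (m u : nat) : rat := ('C(u.+1,2))%:R / ('C(m,2))%:R.

Lemma T_ind m u b c : (b + c)%N = m ->
  T (ind u) b c = al m u * ind u.-1 b c + (be m u * ind u b c + (ga m u * ind u.+1 b c + 0)).
Proof.
move=> hm; have hb : b = (m - c)%N by rewrite -hm addnK.
rewrite /T /ind hm hb /al /be /ga addr0 ![_ / _ * _]mulrAC -!mulrDl -!natrM -!natrD.
by rewrite Tind_nat addnA.
Qed.

Lemma rec n k u :
  gen k.+1 (ind u) n 0 = al (n - k) u * gen k (ind u.-1) n 0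
    + (be (n - k) u * gen k (ind u) n 0 + ga (n - k) u * gen k (ind u.+1) n 0).
Proof.
rewrite genS.
rewrite (@gen_loc k (T (ind u)) (fun b c => al (n - k) u * ind u.-1 b c + (be (n - k) u * ind u b c + (ga (n - k) u * ind u.+1 b c + 0)))); last first.
  move=> b c E; apply: T_ind; rewrite addn0 in E; by rewrite -E addnK.
rewrite gen_lin gen_lin gen_lin gen_zero addr0 //.
Qed.

Ltac tolia := (repeat match goal with H : is_true (_ <= _)%N |- _ => apply (elimT ssrnat.leP) in H end);
  try apply/ssrnat.leP; try (rewrite <- multE in * ); try (rewrite <- plusE in * ); try (rewrite <- minusE in * ); lia.

Lemma frac3 (A B G Q1 Q2 Q3 D N : nat) :
  (A%:R / D%:R) * (Q1%:R / N%:R) + ((B%:R / D%:R) * (Q2%:R / N%:R) + (G%:R / D%:R) * (Q3%:R / N%:R))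
  = ((A * Q1 + B * Q2 + G * Q3)%N)%:R / ((D * N)%N)%:R :> rat.
Proof.
rewrite !natrD !natrM invfM [A%:R / _ * _]mulrACA [B%:R / _ * _]mulrACA [G%:R / _ * _]mulrACA.
by rewrite -!mulrDl addrA.
Qed.

Lemma cross (x y z w : nat) : (0 < y)%N -> (0 < w)%N -> (x * w = z * y)%N ->
  x%:R / y%:R = z%:R / w%:R :> rat.
Proof.
move=> hy hw e; apply/eqP; rewrite eqr_div ?pnatr_eq0 -?lt0n //.
by rewrite -!natrM e.
Qed.

Lemma bin2x x : (2 * 'C(x,2) = x * x.-1)%N.
Proof.
elim: x => [//|x IH]; rewrite binS bin1 mulnDr IH.
case: x {IH} => //= x; nr.
Qed.

Lemma natb (b : bool) : (b%:R : rat) = if b then 1 else 0.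
Proof. by case: b. Qed.

Definition q (n k u : nat) : rat :=
  ((if u is u'.+1 then 'C(k.-1,u') * 'C(n-k,u) else 0)%N)%:R / ('C(n-1,k))%:R.

Lemma main_q n k : (2 <= n)%N -> (1 <= k)%N -> (k <= n - 1)%N ->
  forall u, gen k (ind u) n 0 = q n k u.
Proof.
move=> hn; elim: k => [//|k IH] _ hk u.
case: k IH hk => [|k] IH hk.
- change (T (ind u) n 0 = q n 1 u).
  have hD : ('C(n,2))%:R != 0 :> rat by rewrite pnatr_eq0 -lt0n bin_gt0.
  rewrite /T /ind !natb muln0 mulr0n !mul0r addn0 !addr0.
  case: u => [|[|u]] /=.
  + rewrite mulr0 mul0r /q; symmetry; exact: mul0r.
  + rewrite mulr1 mulfV // /q /= mul1n bin1 mulfV // pnatr_eq0 -lt0n.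
    by rewrite subn_gt0.
  + by rewrite mulr0 mul0r /q /= mul0n mulr0n mul0r.
- have hk1 : (k.+1 <= n - 1)%N by apply: leq_trans hk.
  rewrite rec !IH //.
  case: u => [|u].
  + by rewrite /al /be /ga /q /= !muln0 !mul0r !add0r.
  + set m := (n - k.+1)%N.
    have hm : (2 <= m)%N.
      rewrite /m; tolia.
    rewrite /q /al /be /ga frac3 /=.
    have hsub : (n - k.+2 = m.-1)%N by rewrite /m subnS.
    have hM1 : (n - 1 - k.+1 = m.-1)%N by rewrite /m; tolia.
    apply: cross.
    * rewrite muln_gt0 !bin_gt0; apply/andP; split=> //; exact: ltnW.
    * by rewrite bin_gt0.
    rewrite hsub.
    rewrite (_ : (if u is u''.+1 then 'C(k, u'') * 'C(m, u) else 0)%N =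
                 ((if u is u''.+1 then 'C(k, u'') else 0) * 'C(m, u))%N); last by case: u.
    rewrite -/m [RHS]mulnA.
    apply: (@key k m u.+1 (m-u) (m-u.+1) m.-1 ('C(m,u)) ('C(m,u.+1)) ('C(m,u.+2)) (if u is u''.+1 then 'C(k,u'') else 0) ('C(k,u)) ('C(k,u.+1)) ('C(k.+1,u)) ('C(k.+2,u.+1)) ('C(n-1,k.+1)) ('C(n-1,k.+2)) ('C(m,2)) ('C(m-u,2)) ('C(u.+2,2)) ('C(m.-1,u.+1))).
    * by rewrite mul_bin_left.
    * by rewrite addn1 mul_bin_left.
    * by rewrite mul_bin_down.
    * by rewrite addn2 (mul_bin_diag k.+2).
    * by rewrite addn2 mul_bin_left hM1.
    * by rewrite bin2x.
    * by rewrite bin2x subnS.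
    * by rewrite bin2x addn1.
    * rewrite binS binS; case: u => [|u]; rewrite ?bin0 ?add0n ?binS; cv; lia.
Qed.

Local Close Scope ring_scope.
Theorem mainTheorem9 (n k : nat) (hn : 2 <= n) (hk1 : 1 <= k) (hk2 : k <= n - 1) :
  probUk n k 0 = 0%R /\
  forall j : nat,
  probUk n k j.+1 =
    (if j <= n - k - 1 then
       (('C(k - 1, j) * 'C(n - k, n - k - 1 - j))%:R / ('C(n - 1, n - k - 1))%:R)%R
     else 0%R).
Proof.
have E r : probUk n k r = q n k r.
  by rewrite /probUk probU_gen !count_nseq /= mul1n mul0n main_q.
split; first by rewrite E /q mul0r.
move=> j; rewrite E /q [(k - 1)%N]subn1.
have hnk : (1 <= n - k)%N.
  by tolia.
have e1 : (n - k - 1 = (n - 1) - k)%N by rewrite -!subnDA addnC.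
case: (leqP j (n - k - 1)) => hj.
- have hj' : (j.+1 <= n - k)%N.
    by tolia.
  have e2 : (n - k - 1 - j = (n - k) - j.+1)%N by rewrite -!subnDA add1n.
  by rewrite e2 bin_sub // e1 bin_sub.
- rewrite (@bin_small (n - k) j.+1) ?muln0 ?mul0r //.
  by tolia.
Qed.
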